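(* Let $(\Sigma_P,\theta,\mu)$ be a Markov shift over a finite alphabet $S$, let $n\in\mathbb{N}$ and let $\varphi=\sum_{C\in C_n}k_C\mathbbm{1}_C$ with $k_C\in\mathbb{N}$. Let $\overline{M}$, $G$ and the cofactors $C_{t,r}$ be as defined in the context. Let $(a_1,\dots,a_m)$ be an admissible word with $m\ge n$, let $t$ be the index of the block $[a_1,\dots,a_n]\times[0,1)$ and $r$ the index of the block $[a_{m-n+1},\dots,a_m]\times[0,1)$. Then \[C_{t,r}(1)=\frac{1}{\mu(\varphi)}\,\mu([a_1,\dots,a_n])\,G(1).\]
   Context: A Markov shift: $P=(p_{a,b})_{a,b\in S}$ is a non-negative irreducible row-stochastic matrix, $\Sigma_P=\{x\in S^{\mathbb{N}}:p_{x_i,x_{i+1}}>0\ \forall i\}$, $\theta$ the shift, $\pi$ the unique positive probability vector with $\pi P=\pi$, and $\mu([a_1,\dots,a_n])=\pi_{a_1}\prod_{i=1}^{n-1}p_{a_i,a_{i+1}}$. $C_n$ is the set of (nonempty) $n$-cylinders; $\mu(\varphi)=\int\varphi\,d\mu$. The blocks are $\overline{C}_n=\{C\times[k-1,k):C\in C_n,1\le k\le k_C\}$, enumerated in a fixed order. $\overline{M}$ is the $\overline{C}_n\times\overline{C}_n$ matrix with: for $b=C\times[k-1,k)$ with $k<k_C$, $\overline{M}_{b,b'}=1$ if $b'=C\times[k,k+1)$ and $0$ otherwise; for $b=[a_1,\dots,a_n]\times[k_C-1,k_C)$ with $C=[a_1,\dots,a_n]$, $\overline{M}_{b,b'}=p_{a_n,a}$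 if $b'=[a_2,\dots,a_n,a]\times[0,1)$ for some $a\in S$ and $0$ otherwise. (This is the matrix of the transfer operator of the time-one map of the special flow under $\varphi$ on functions constant on blocks, w.r.t. the basis $\mathbbm{1}_b/\overline{\mu}(b)$.) $G$ is the polynomial with $\det(\mathrm{id}-z\overline{M})=(1-z)G(z)$, and $C_{t,r}(z)=(-1)^{t+r}\det[\mathrm{id}-z\overline{M}]_{t,r}$ is the cofactor (determinant of $\mathrm{id}-z\overline{M}$ with row $t$ and column $r$ removed). *)

(* Defs.v *)
From HB Require Import structures.
From mathcomp Require Import all_boot all_order all_algebra.
From mathcomp Require Import reals.

Set Implicit Arguments.
Unset Strict Implicit.
Unset Printing Implicit Defensive.

Import Order.TTheory GRing.Theory Num.Theory.
Local Open Scope ring_scope.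

(* Markov shift over the finite (nonempty) alphabet S = 'I_s.+1 = {0,...,s}. *)
Section MarkovBlocks.
Variable R : realType.
Variable s : nat.
Variable P : 'M[R]_s.+1.

Definition stochastic : Prop :=
  (forall i j, 0 <= P i j) /\ (forall i, \sum_j P i j = 1).

Definition irreducible : Prop :=
  forall i j, exists m : nat, 0 < (P ^+ m) i j.

Definition stationary (pi : 'rV[R]_s.+1) : Prop :=
  [/\ forall i, 0 < pi 0 i, \sum_i pi 0 i = 1 & pi *m P = pi].

(* admissible word: p_{w_i, w_{i+1}} > 0 for consecutive letters;
   the cylinder [w] is nonempty iff w is admissible *)
Definition admissible (w : seq 'I_s.+1) : bool :=
  sorted (fun a b => 0 < P a b) w.

(* mu([a_1,...,a_m]) = pi_{a_1} prod_{i=1}^{m-1} p_{a_i,a_{i+1}}  (for m >= 1) *)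
Definition mu (pi : 'rV[R]_s.+1) (w : seq 'I_s.+1) : R :=
  pi 0 (head ord0 w) *
  \prod_(i < (size w).-1) P (nth ord0 w i) (nth ord0 w i.+1).

Variable n : nat.
(* k C = k_C, the value of phi on the n-cylinder C (only relevant on
   admissible words, i.e. on nonempty cylinders) *)
Variable k : n.-tuple 'I_s.+1 -> nat.

Definition kmax : nat := \max_(C : n.-tuple 'I_s.+1) k C.

(* a block C x [j, j+1) with C a nonempty n-cylinder and 0 <= j < k_C
   (j = k-1 in the paper's notation C x [k-1,k), 1 <= k <= k_C) *)
Definition is_block (x : n.-tuple 'I_s.+1 * 'I_kmax) : bool :=
  admissible x.1 && (x.2 < k x.1)%N.

Definition block := {x : n.-tuple 'I_s.+1 * 'I_kmax | is_block x}.

Definition nblocks : nat := #|{: block}|.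

Definition blk (i : 'I_nblocks) : n.-tuple 'I_s.+1 * 'I_kmax :=
  val (enum_val i).

Definition Mbar_entry (b b' : n.-tuple 'I_s.+1 * 'I_kmax) : R :=
  let: (C, j) := b in
  let: (C', j') := b' in
  if (j.+1 < k C)%N then ((C' == C) && (j' == j.+1 :> nat))%:R
  else if (j' == 0%N :> nat) && (take n.-1 C' == behead C)
       then P (last ord0 C) (last ord0 C')
       else 0.

Definition Mbar : 'M[R]_nblocks := \matrix_(i, j) Mbar_entry (blk i) (blk j).

Definition mu_phi (pi : 'rV[R]_s.+1) : R :=
  \sum_(C : n.-tuple 'I_s.+1 | admissible C) (k C)%:R * mu pi C.

Definition IzM : 'M[{poly R}]_nblocks := 1%:M - 'X *: map_mx polyC Mbar.

End MarkovBlocks.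

(* Main.v *)
Require Import Defs.
From HB Require Import structures.
From mathcomp Require Import all_boot all_order all_algebra.
From mathcomp Require Import reals.
From mathcomp Require Import ring.
Import Order.TTheory GRing.Theory Num.Theory.
Local Open Scope ring_scope.

Lemma cofactor_rank (F : fieldType) m (A : 'M[F]_m) i j :
  (\rank A < m.-1)%N -> cofactor A i j = 0.
Proof.
move=> hr; rewrite /cofactor.
have [->|hd] := eqVneq (\det (row' i (col' j A))) 0; first by rewrite mulr0.
exfalso.
have hu : row' i (col' j A) \in unitmx by rewrite unitmxE unitfE.
have := mxrank_unit hu => hB.
have h1 : (\rank (row' i (col' j A)) <= \rank (col' j A))%N.
  apply: mxrankS; apply/row_subP => k.
  have -> : row k (row' i (col' j A)) = row (lift i k) (col' j A) by apply/rowP => y; rewrite !mxE.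
  exact: row_sub.
have h2 : (\rank (col' j A) <= \rank A)%N.
  have -> : col' j A = A *m colsub (lift j) 1%:M.
    by rewrite mulmx_colsub mulmx1; apply/matrixP => x y; rewrite !mxE.
  exact: mxrankM_maxl.
move: hr; rewrite -hB. move=> hr.
have := leq_trans h1 h2. by rewrite leqNgt hr.
Qed.

Lemma adj_rows (F : fieldType) m (A : 'M[F]_m) (v : 'rV_m) :
  \det A = 0 -> v *m A = 0 -> v != 0 ->
  forall i, exists c, row i (\adj A) = c *: v.
Proof.
move=> hd hv vn0 i.
have [hr|hr] := ltnP (\rank A) m.-1.
  exists 0; rewrite scale0r; apply/rowP => j; rewrite !mxE; exact: cofactor_rank.
have hm : (0 < m)%N by case: (m) i => // [[]].
have hlt : (\rank A < m)%N.
  rewrite ltn_neqAle rank_leq_row andbT.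
  apply/negP => /eqP hrm.
  have : A \in unitmx by rewrite -row_free_unit /row_free hrm.
  by rewrite unitmxE hd unitr0.
have hrk : \rank A = m.-1 by apply/eqP; rewrite eqn_leq hr andbT -ltnS prednK.
have hK : \rank (kermx A) = 1%N by rewrite mxrank_ker hrk; case: (m) hm => // m' _ /=; rewrite subSn // subnn.
have vK : (v <= kermx A)%MS by apply/sub_kermxP.
have rK : (row i (\adj A) <= kermx A)%MS.
  by apply/sub_kermxP; rewrite -row_mul mul_adj_mx hd raddf0 row0.
have Kv : (kermx A <= v)%MS.
  have [_ e] := mxrank_leqif_eq vK; move: e; rewrite hK rank_rV vn0 eqxx.
  by move=> /esym /andP [].
have := submx_trans rK Kv => /submxP [D ->].
by exists (D 0 0); rewrite {1}[D]mx11_scalar mul_scalar_mx.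
Qed.

Section Blocks.
Variable R : realType.
Variable s : nat.
Variable P : 'M[R]_s.+1.
Variable n : nat.
Variable k : n.-tuple 'I_s.+1 -> nat.

Local Notation T := (n.-tuple 'I_s.+1).
Local Notation X := (n.-tuple 'I_s.+1 * 'I_(kmax k))%type.
Local Notation e := (fun a b : 'I_s.+1 => 0 < P a b).

Fixpoint pr (x : 'I_s.+1) (w : seq 'I_s.+1) : R :=
  if w is y :: w' then P x y * pr y w' else 1.

Lemma prod_pr x w :
  \prod_(i < size w) P (nth ord0 (x :: w) i) (nth ord0 (x :: w) i.+1) = pr x w.
Proof.
elim: w x => [|y w IH] x /=; first by rewrite big_ord0.
by rewrite big_ord_recl /= IH.
Qed.

Lemma mu_cons pi x w : mu P pi (x :: w) = pi 0 x * pr x w.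
Proof. by rewrite /mu /= prod_pr. Qed.

Lemma pr_rcons x w c : pr x (rcons w c) = pr x w * P (last x w) c.
Proof. elim: w x => [|y w IH] x /=; first by rewrite mulr1 mul1r.
by rewrite IH mulrA. Qed.

Hypothesis P0 : forall i j, 0 <= P i j.

Lemma pr_ge0 x w : 0 <= pr x w.
Proof. by elim: w x => [|y w IH] x //=; rewrite mulr_ge0. Qed.

Lemma pr_gt0 x w : path e x w -> 0 < pr x w.
Proof. by elim: w x => [|y w IH] x //= /andP [h1 h2]; rewrite mulr_gt0 // IH. Qed.

Lemma blkP (i : 'I_(nblocks P k)) : @is_block R s P n k (blk i).
Proof. exact: valP (enum_val i). Qed.

Lemma sum_blocks (i0 : 'I_(nblocks P k)) (F : X -> R) :
  \sum_(i < nblocks P k) F (blk i) = \sum_(x | @is_block R s P n k x) F x.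
Proof.
pose b0 : block P k := enum_val i0.
rewrite /blk -(big_enum_val (A := predT) (fun b : block P k => F (val b))).
rewrite (reindex_onto (fun b : block P k => val b) (insubd b0)) /=; last first.
  by move=> x hx; rewrite insubdK.
by apply: eq_bigl => b; rewrite valKd eqxx andbT (valP b).
Qed.

Hypothesis hn : (0 < n)%N.
Hypothesis Pst : forall i, \sum_j P i j = 1.
Hypothesis kpos : forall C : T, admissible P C -> (0 < k C)%N.

Lemma rsize (C : T) a : size (rcons (behead C) a) == n.
Proof. by rewrite size_rcons size_behead size_tuple prednK. Qed.

Definition rtup (C : T) a : T := Tuple (rsize C a).

Lemma adm_rcons (w : seq 'I_s.+1) a :
  sorted e w -> e (last ord0 w) a -> sorted e (rcons (behead w) a).
Proof.
case: w => [|c0 cs] //= h1 h2.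
case: cs h1 h2 => [|c1 cs] //= /andP [_ h] he.
by rewrite rcons_path h.
Qed.

Lemma take_rcons_last (w : seq 'I_s.+1) : size w = n ->
  rcons (take n.-1 w) (last ord0 w) = w.
Proof.
case/lastP: w => [|w c]; first by move=> h; move: hn; rewrite -h.
rewrite size_rcons => <- /=.
by rewrite -[rcons w c]cats1 take_size_cat // last_cat cats1.
Qed.

Lemma k_le_kmax (C : T) : (k C <= kmax k)%N.
Proof. exact: leq_bigmax. Qed.

Lemma row_entry_sum (b : X) : @is_block R s P n k b ->
  \sum_(x | @is_block R s P n k x) Mbar_entry P b x = 1.
Proof.
case: b => C j0 /andP [/= admC ltj].
have km : (0 < kmax k)%N by apply: leq_trans (k_le_kmax C); exact: leq_ltn_trans ltj.
rewrite /Mbar_entry.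
case hj : (j0.+1 < k C)%N.
  have hJ : (j0.+1 < kmax k)%N by apply: leq_trans hj (k_le_kmax C).
  pose J : 'I_(kmax k) := Ordinal hJ.
  rewrite (bigD1 (C, J)) /=; last by rewrite /is_block /= admC hj.
  rewrite !eqxx /= big1 ?addr0 // => [[C' j']] /andP [_ hne].
  case: (eqVneq C' C) => [eC|] //=; case: (eqVneq (val j') j0.+1) => [ej|] //=.
  have eJ : j' = J by apply: val_inj; rewrite /= ej.
  by move: hne; rewrite eC eJ eqxx.
pose z0 : 'I_(kmax k) := Ordinal km.
pose f a : X := (rtup C a, z0).
rewrite (eq_bigr (fun x : X => if (x.2 == 0%N :> nat) && (take n.-1 x.1 == behead C)
   then P (last ord0 C) (last ord0 x.1) else 0)); last by case.
rewrite -big_mkcondr.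
rewrite (reindex_onto f (fun x : X => last ord0 x.1)) /=; last first.
  move=> [C' j'] /andP [_ /andP [/eqP hj' /eqP ht]] /=.
  congr pair; last by apply: val_inj.
  apply: val_inj => /=; rewrite -ht take_rcons_last //.
  by rewrite size_tuple.
rewrite -(Pst (last ord0 C)) [RHS](bigID (fun a => @is_block R s P n k (f a))) /=.
rewrite [X in _ = _ + X]big1 ?addr0; last first.
  move=> a hb; have := P0 (last ord0 C) a; rewrite le_eqVlt => /orP [/eqP <- //|hp].
  exfalso; move/negP: hb; apply.
  have ha : admissible P (rtup C a) by apply: adm_rcons.
  by rewrite /is_block ha /= kpos.
apply: eq_big => a; last by rewrite last_rcons.
rewrite /= last_rcons -cats1 take_size_cat ?size_behead ?size_tuple //.
by rewrite !eqxx !andbT.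
Qed.

Variable pi : 'rV[R]_s.+1.
Hypothesis piP : forall j, \sum_i pi 0 i * P i j = pi 0 j.

Lemma head_behead (w : seq 'I_s.+1) : size w = n -> head ord0 w :: behead w = w.
Proof. by case: w => [|? ?] // h; move: hn; rewrite -h. Qed.

Lemma col_entry_sum (b' : X) : @is_block R s P n k b' ->
  \sum_(x | @is_block R s P n k x) mu P pi x.1 * Mbar_entry P x b' = mu P pi b'.1.
Proof.
case: b' => C' j' /andP [/= admC' ltj'].
have km : (0 < kmax k)%N by apply: leq_trans (k_le_kmax C'); exact: leq_ltn_trans ltj'.
case: (posnP j') => hj0; last first.
  have hJ : (j'.-1 < kmax k)%N by apply: leq_ltn_trans (leq_pred _) (ltn_ord j').
  pose x0 : X := (C', Ordinal hJ).
  rewrite (bigD1 x0) /=; last by rewrite /is_block /= admC' (leq_ltn_trans (leq_pred _) ltj').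
  rewrite prednK // ltj' !eqxx mulr1 big1 ?addr0 // => [[C j]] /andP [_ hne] /=.
  case: ifP => _; last by rewrite eqn0Ngt hj0 /= mulr0.
  case: (eqVneq C' C) => [eC|] /=; last by rewrite mulr0.
  case: (eqVneq (val j') j.+1) => [ej|] /=; last by rewrite mulr0.
  have eJ : j = Ordinal hJ by apply: val_inj; rewrite /= ej.
  by move: hne; rewrite -eC eJ eqxx.
rewrite (eq_bigr (fun x : X => if (~~ (x.2.+1 < k x.1)%N) && (take n.-1 C' == behead x.1)
   then mu P pi x.1 * P (last ord0 x.1) (last ord0 C') else 0)); last first.
  case=> C j _ /=; rewrite /Mbar_entry hj0 /=.
  case: ifP => _ /=; first by rewrite andbF mulr0.
  by case: ifP => _ //; rewrite mulr0.
rewrite -big_mkcondr.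
have csize a : size (a :: take n.-1 C') == n.
  by rewrite /= size_takel ?size_tuple ?leq_pred // prednK.
pose ctup a : T := Tuple (csize a).
have pl a : ((k (ctup a)).-1 < kmax k)%N.
  by case: (k (ctup a)) (k_le_kmax (ctup a)) => //= m hm.
pose g a : X := (ctup a, Ordinal (pl a)).
rewrite (reindex_onto g (fun x : X => head ord0 x.1)) /=; last first.
  move=> [C j] /andP [/andP [_ hjk] /andP [hj ht]] /=.
  rewrite /= in hjk hj ht.
  have eC : ctup (head ord0 C) = C.
    by apply: val_inj => /=; rewrite (eqP ht) head_behead // size_tuple.
  have e2 : (Ordinal (pl (head ord0 C)) : 'I_(kmax k)) = j.
    apply: val_inj => /=; rewrite eC.
    move: hjk hj; case: (k C) => // m; rewrite ltnS /= => h1 h2.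
    by rewrite ltnS -leqNgt in h2; apply/eqP; rewrite eqn_leq h1 h2.
  by rewrite /g e2 eC.
have hC'pos : (0 < size (tval C'))%N by rewrite size_tuple.
have hsz := size_tuple C'.
case eC' : (tval C') hC'pos hsz => [|c0 cs] // _ hsz.
rewrite (eq_bigl (fun a => @is_block R s P n k (g a))); last first.
  move=> a /=; apply/idP/idP => [/andP [/andP [-> _] _] //|hb].
  by rewrite hb eqxx andbT /= eqxx andbT; case: (k (ctup a)) => //= m; rewrite ltnn.
rewrite (eq_bigr (fun a => pi 0 a * (P a c0 * pr c0 cs))); last first.
 move=> a _; rewrite mu_cons -mulrA -pr_rcons take_rcons_last //.
rewrite /mu /= prod_pr -(piP c0) mulr_suml.
rewrite [RHS](bigID (fun a => @is_block R s P n k (g a))) /=.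
rewrite [X in _ = _ + X]big1 ?addr0; last first.
  move=> a hb; have := P0 a c0; rewrite le_eqVlt => /orP [/eqP <-|hp]; first by rewrite mulr0 mul0r.
  exfalso; move/negP: hb; apply.
  have ha : admissible P (ctup a).
    rewrite /admissible /=; apply: take_path; rewrite eC' /= hp /=.
    by move: admC'; rewrite /admissible eC'.
  by rewrite /is_block ha /=; case: (k (ctup a)) (kpos _ ha).
by apply: eq_bigr => a _; rewrite mulrA.
Qed.

Lemma sum_nu : \sum_(x | @is_block R s P n k x) mu P pi x.1 = mu_phi P k pi.
Proof.
rewrite /mu_phi -(pair_big_dep (fun C : T => admissible P C) (fun C (j : 'I_(kmax k)) => (j < k C)%N) (fun C j => mu P pi C)) /=.
apply: eq_bigr => C _.
rewrite (big_ord_narrow (k_le_kmax C)) sumr_const card_ord.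
by rewrite mulr_natl.
Qed.

Hypothesis pipos : forall i, 0 < pi 0 i.

Lemma mu_ge0 w : 0 <= mu P pi w.
Proof.
case: w => [|x w]; first by rewrite /mu /= big_ord0 mulr1 ltW.
by rewrite mu_cons; apply: mulr_ge0; [exact: ltW | exact: pr_ge0].
Qed.

Lemma mu_gt0 w : admissible P w -> 0 < mu P pi w.
Proof.
case: w => [|x w]; first by rewrite /mu /= big_ord0 mulr1.
by rewrite mu_cons => h; rewrite mulr_gt0 ?pr_gt0.
Qed.

Lemma main_sec (t r : 'I_(nblocks P k)) (G : {poly R}) :
  \det (IzM P k) = (1 - 'X) * G ->
  (cofactor (IzM P k) t r).[1] = (mu_phi P k pi)^-1 * mu P pi (blk t).1 * G.[1].
Proof.
move=> hdet.
pose f := horner_eval (1 : R).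
pose A1 := map_mx f (IzM P k).
have hA1 : A1 = 1%:M - Mbar P k.
  apply/matrixP => i j; rewrite !mxE /f horner_evalE.
  rewrite hornerD hornerN hornerM hornerX hornerC mul1r.
  by case: (i == j); rewrite /= ?hornerC.
pose u : 'cV[R]_(nblocks P k) := const_mx 1.
have hMu : Mbar P k *m u = u.
  apply/matrixP => i j; rewrite !mxE.
  under eq_bigr do rewrite !mxE mulr1.
  rewrite (sum_blocks t (fun x => Mbar_entry P (blk i) x)).
  exact: row_entry_sum (blkP i).
pose nu : 'rV[R]_(nblocks P k) := \row_j mu P pi (blk j).1.
have hnuM : nu *m Mbar P k = nu.
  apply/matrixP => i j; rewrite !mxE.
  under eq_bigr do rewrite !mxE.
  rewrite (sum_blocks t (fun x => mu P pi x.1 * Mbar_entry P x (blk j))).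
  exact: col_entry_sum (blkP j).
have hnuA : nu *m A1 = 0 by rewrite hA1 mulmxBr mulmx1 hnuM subrr.
have hnu0 : nu != 0.
  apply/eqP => h; have := congr1 (fun M : 'rV_ _ => M 0 t) h; rewrite !mxE => h0.
  have := mu_gt0 (blk t).1; move: (blkP t) => /andP [ha _] => /(_ ha).
  by rewrite h0 ltxx.
have X1 : (1 - 'X : {poly R}) != 0.
  apply/eqP => h; have := congr1 (horner^~ 0) h.
  by rewrite !hornerE subr0 => /eqP; rewrite oner_eq0.
pose uP : 'cV[{poly R}]_(nblocks P k) := const_mx 1.
have huP : uP = map_mx polyC u by apply/matrixP => i j; rewrite !mxE.
have hAu : IzM P k *m uP = (1 - 'X) *: uP.
  rewrite /IzM mulmxBl mul1mx -scalemxAl huP -map_mxM hMu.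
  by rewrite scalerBl scale1r.
have hV : \adj (IzM P k) *m uP = G *: uP.
  have e1 : (1 - 'X) *: (\adj (IzM P k) *m uP) = (1 - 'X) *: (G *: uP).
    by rewrite scalemxAr -hAu mulmxA mul_adj_mx mul_scalar_mx hdet scalerA.
  apply/matrixP => i j; have := congr1 (fun M : 'cV_ _ => M i j) e1.
  move=> h; apply: (mulfI X1); move: h.
  by rewrite [in X in X -> _]mxE [((1 - 'X) *: (G *: uP)) i j]mxE.
have hadj : \adj A1 *m u = G.[1] *: u.
  have := congr1 (map_mx f) hV; rewrite map_mxM map_mx_adj.
  have -> : map_mx f uP = u by apply/matrixP => i j; rewrite !mxE /f horner_evalE hornerC.
  move=> ->; apply/matrixP => i j; rewrite !mxE /f horner_evalE hornerM hornerC.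
  by [].
have hdet1 : \det A1 = 0.
  by rewrite det_map_mx hdet /= !horner_evalE !hornerE subrr mul0r.
have [c hc] := @adj_rows _ _ A1 nu hdet1 hnuA hnu0 r.
have hrow j : cofactor A1 j r = c * mu P pi (blk j).1.
  by have := congr1 (fun M : 'rV_ _ => M 0 j) hc; rewrite !mxE.
have hsum : G.[1] = c * mu_phi P k pi.
  have := congr1 (fun M : 'cV_ _ => M r 0) hadj; rewrite !mxE mulr1 => <-.
  under eq_bigr do rewrite !mxE mulr1 hrow.
  by rewrite -mulr_sumr (sum_blocks t (fun x => mu P pi x.1)) sum_nu.
have hphi : 0 < mu_phi P k pi.
  rewrite -sum_nu -(sum_blocks t (fun x => mu P pi x.1)) (bigD1 t) //=.
  apply: ltr_wpDr; first by apply: sumr_ge0 => i _; exact: mu_ge0.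
  by apply: mu_gt0; move: (blkP t) => /andP [].
have hcof : cofactor (IzM P k) t r = \adj (IzM P k) r t by rewrite mxE.
rewrite hcof.
have -> : (\adj (IzM P k) r t).[1] = \adj A1 r t.
  by rewrite /A1 -map_mx_adj !mxE /= horner_evalE.
rewrite [\adj A1 r t]mxE hrow hsum; field.
by rewrite gt_eqF.
Qed.
End Blocks.

Theorem lemma7p3 (R : realType) (s : nat) (P : 'M[R]_s.+1) (pi : 'rV[R]_s.+1)
  (n : nat) (k : n.-tuple 'I_s.+1 -> nat) (a : seq 'I_s.+1)
  (t r : 'I_(nblocks P k)) (G : {poly R}) :
  stochastic P -> irreducible P -> stationary P pi ->
  (0 < n)%N ->
  (forall C : n.-tuple 'I_s.+1, admissible P C -> (0 < k C)%N) ->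
  admissible P a -> (n <= size a)%N ->
  (blk t).1 = take n a :> seq 'I_s.+1 -> (blk t).2 = 0%N :> nat ->
  (blk r).1 = drop (size a - n) a :> seq 'I_s.+1 -> (blk r).2 = 0%N :> nat ->
  \det (IzM P k) = (1 - 'X) * G ->
  (cofactor (IzM P k) t r).[1] = (mu_phi P k pi)^-1 * mu P pi (take n a) * G.[1].
Proof.
move=> [P0 Pst] _ [pipos _ piM] hn kpos _ _ ht _ _ _ hdet.
rewrite -ht.
apply: main_sec => //.
move=> j; have := congr1 (fun M : 'rV_ _ => M 0 j) piM; rewrite !mxE => <-.
by [].
Qed.
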